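(* Let $n$ be a nonnegative integer. Then $$\sum_{r=0}^n(-1)^{r+n}\zeta(\{1\}^r,n+2-r)=\begin{cases}\zeta^\star(\{2\}^{m+1}),& n=2m,\\ 0,& n=2m+1.\end{cases}$$
   Context: $\zeta(\alpha_1,\ldots,\alpha_k)=\sum_{1\le k_1<\cdots<k_k}k_1^{-\alpha_1}\cdots k_k^{-\alpha_k}$ and $\zeta^\star(\alpha_1,\ldots,\alpha_k)=\sum_{1\le k_1\le\cdots\le k_k}k_1^{-\alpha_1}\cdots k_k^{-\alpha_k}$; $\{a\}^k$ denotes $k$ repetitions of $a$. *)

(* Defs.v *)
From Stdlib Require Import Reals List.
From Coquelicot Require Import Coquelicot.
Open Scope R_scope.

(* Finite sum of f k for k = a, a+1, ..., b (empty if b < a). *)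
Definition sum_range (a b : nat) (f : nat -> R) : R :=
  fold_right Rplus 0 (map f (seq a (S b - a))).

(* mzv_part s lo N = sum over lo < k_1 < ... < k_d <= N of prod k_i^{-s_i} *)
Fixpoint mzv_part (s : list nat) (lo N : nat) : R :=
  match s with
  | nil => 1
  | a :: s' => sum_range (S lo) N (fun k => / (INR k ^ a) * mzv_part s' k N)
  end.

(* mzsv_part s lo N = sum over lo <= k_1 <= ... <= k_d <= N of prod k_i^{-s_i} *)
Fixpoint mzsv_part (s : list nat) (lo N : nat) : R :=
  match s with
  | nil => 1
  | a :: s' => sum_range lo N (fun k => / (INR k ^ a) * mzsv_part s' k N)
  end.

Definition mzv (s : list nat) : R := real (Lim_seq (fun N => mzv_part s 0 N)).

Definition mzsv (s : list nat) : R := real (Lim_seq (fun N => mzsv_part s 1 N)).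

(* Main.v *)
Require Import Defs.
From Stdlib Require Import Reals Lra Lia List Arith FunctionalExtensionality.
From Coquelicot Require Import Coquelicot.
Open Scope R_scope.

Fixpoint rsum (k : nat) (f : nat -> R) : R :=
  match k with O => 0 | S k' => rsum k' f + f k' end.

Lemma rsum_1 f : rsum 1 f = f O.
Proof. simpl. ring. Qed.

Lemma rsum_ext k f g : (forall i, (i < k)%nat -> f i = g i) -> rsum k f = rsum k g.
Proof. induction k; intros H; simpl; auto. rewrite IHk by (intros; apply H; lia). rewrite H by lia. auto. Qed.

Lemma rsum_plus k f g : rsum k (fun i => f i + g i) = rsum k f + rsum k g.
Proof. induction k; simpl; [lra|rewrite IHk; lra]. Qed.

Lemma rsum_scal k c f : rsum k (fun i => c * f i) = c * rsum k f.
Proof. induction k; simpl; [lra|rewrite IHk; lra]. Qed.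

Lemma rsum_opp k f : rsum k (fun i => - f i) = - rsum k f.
Proof. induction k; simpl; [lra|rewrite IHk; lra]. Qed.

Lemma rsum_zero k f : (forall i, (i < k)%nat -> f i = 0) -> rsum k f = 0.
Proof. intros H; rewrite (rsum_ext k f (fun _ => 0)) by auto. induction k; simpl; [lra|]. rewrite IHk; [lra|]. intros; auto. Qed.

Lemma rsum_shift k f : rsum (S k) f = f O + rsum k (fun i => f (S i)).
Proof. induction k; simpl in *; [lra|]. rewrite IHk. lra. Qed.

Lemma rsum_le k f g : (forall i, (i < k)%nat -> f i <= g i) -> rsum k f <= rsum k g.
Proof. induction k; intros H; simpl; [lra|]. apply Rplus_le_compat; [apply IHk; intros; apply H; lia| apply H; lia]. Qed.

Lemma rsum_abs k f : Rabs (rsum k f) <= rsum k (fun i => Rabs (f i)).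
Proof. induction k; simpl. rewrite Rabs_R0; lra. eapply Rle_trans; [apply Rabs_triang|]. lra. Qed.

Lemma rsum_const k c : rsum k (fun _ => c) = INR k * c.
Proof. induction k; simpl rsum; [simpl; lra|]. rewrite IHk, S_INR. lra. Qed.

Lemma rsum_rev k f : rsum k (fun i => f (k - 1 - i)%nat) = rsum k f.
Proof.
  induction k; [reflexivity|].
  rewrite rsum_shift. simpl rsum at 2.
  replace (S k - 1 - 0)%nat with k by lia.
  rewrite <- IHk. rewrite Rplus_comm. f_equal. apply rsum_ext. intros i Hi. f_equal. lia.
Qed.

Lemma rsum_S k f : rsum (S k) f = rsum k f + f k.
Proof. reflexivity. Qed.

Lemma rsum_tri_step n (a : nat -> nat -> R) :
  rsum (S (S n)) (fun i => rsum (S (S n - i)) (fun j => a i j)) =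
  rsum (S n) (fun i => rsum (S (n - i)) (fun j => a i j)) + rsum (S (S n)) (fun i => a i (S n - i)%nat).
Proof.
  rewrite (rsum_S (S n) (fun i => rsum (S (S n - i)) (fun j => a i j))).
  rewrite (rsum_S (S n) (fun i => a i (S n - i)%nat)).
  replace (S n - S n)%nat with O by lia.
  rewrite (rsum_ext (S n) (fun i => rsum (S (S n - i)) (fun j => a i j))
     (fun i => rsum (S (n - i)) (fun j => a i j) + a i (S n - i)%nat)).
  - rewrite rsum_plus. change (rsum 1 ?f) with (0 + f O). lra.
  - intros i Hi. replace (S n - i)%nat with (S (n - i)) by lia. rewrite rsum_S. reflexivity.
Qed.

Lemma rsum_triangle n (a : nat -> nat -> R) :
  rsum (S n) (fun k => rsum (S k) (fun i => a i (k - i)%nat)) =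
  rsum (S n) (fun i => rsum (S (n - i)) (fun j => a i j)).
Proof.
  induction n.
  - simpl. lra.
  - rewrite rsum_tri_step. rewrite <- IHn. rewrite rsum_S. reflexivity.
Qed.

Definition fps := nat -> R.
Definition fadd (f g : fps) : fps := fun n => f n + g n.
Definition fopp (f : fps) : fps := fun n => - f n.
Definition fsub (f g : fps) : fps := fun n => f n - g n.
Definition fmul (f g : fps) : fps := fun n => rsum (S n) (fun i => f i * g (n - i)%nat).
Definition cst (a : R) : fps := fun n => match n with O => a | _ => 0 end.
Definition fX : fps := fun n => match n with 1%nat => 1 | _ => 0 end.
Definition f0 := cst 0.
Definition f1 := cst 1.

Lemma fext (f g : fps) : (forall n, f n = g n) -> f = g.
Proof. intros; apply functional_extensionality; auto. Qed.

Lemma fmul_comm f g : fmul f g = fmul g f.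
Proof.
  apply fext; intro n. unfold fmul. rewrite <- rsum_rev. apply rsum_ext. intros i Hi.
  replace (S n - 1 - i)%nat with (n - i)%nat by lia. replace (n - (n - i))%nat with i by lia. lra.
Qed.

Lemma fmul_assoc f g h : fmul f (fmul g h) = fmul (fmul f g) h.
Proof.
  apply fext; intro n. unfold fmul.
  rewrite (rsum_ext (S n) (fun k => rsum (S k) (fun i => f i * g (k - i)%nat) * h (n - k)%nat)
     (fun k => rsum (S k) (fun i => (fun i j => f i * g j * h (n - i - j)%nat) i (k - i)%nat))).
  2:{ intros k Hk. rewrite Rmult_comm, <- rsum_scal. apply rsum_ext. intros i Hi.
      replace (n - i - (k - i))%nat with (n - k)%nat by lia. lra. }
  pose proof (rsum_triangle n (fun i j => f i * g j * h (n - i - j)%nat)) as T. cbv beta in T |- *.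
  rewrite T. apply rsum_ext. intros i Hi. rewrite <- rsum_scal. apply rsum_ext.
  intros j Hj. replace (n - i - j)%nat with (n - i - j)%nat by lia. lra.
Qed.

Lemma fmul_1_l f : fmul f1 f = f.
Proof.
  apply fext; intro n. unfold fmul. rewrite rsum_shift. rewrite rsum_zero.
  - unfold f1, cst. replace (n - 0)%nat with n by lia. lra.
  - intros i Hi. unfold f1, cst. lra.
Qed.

Lemma fdistr f g h : fmul (fadd f g) h = fadd (fmul f h) (fmul g h).
Proof.
  apply fext; intro n. unfold fmul, fadd. rewrite <- rsum_plus. apply rsum_ext. intros; lra.
Qed.

Lemma fps_ring : ring_theory f0 f1 fadd fmul fsub fopp (@eq fps).
Proof.
  constructor.
  - intro x; apply fext; intro n; unfold fadd, f0, cst; destruct n; lra.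
  - intros x y; apply fext; intro n; unfold fadd; lra.
  - intros x y z; apply fext; intro n; unfold fadd; lra.
  - apply fmul_1_l.
  - apply fmul_comm.
  - apply fmul_assoc.
  - apply fdistr.
  - intros x y; apply fext; intro n; unfold fadd, fsub, fopp; lra.
  - intro x; apply fext; intro n; unfold fadd, fopp, f0, cst; destruct n; lra.
Qed.

Add Ring fpsR : fps_ring.

Declare Scope fps_scope.
Delimit Scope fps_scope with fps.
Infix "+" := fadd : fps_scope.
Infix "*" := fmul : fps_scope.
Infix "-" := fsub : fps_scope.
Notation "- x" := (fopp x) : fps_scope.

Ltac fring := match goal with |- ?a = ?b => change (@eq fps a b) end; ring.

Lemma test_ring (a b : fps) : (a + b * a = a * (f1 + b))%fps.
Proof. ring. Qed.

Lemma coef_cst_mul a f n : fmul (cst a) f n = a * f n.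
Proof. unfold fmul. rewrite rsum_shift, rsum_zero. simpl. replace (n-0)%nat with n by lia. lra.
  intros i Hi. simpl. lra. Qed.

Lemma coef_X_mul_0 f : fmul fX f O = 0.
Proof. unfold fmul. simpl. lra. Qed.

Lemma coef_X_mul_S f n : fmul fX f (S n) = f n.
Proof. unfold fmul. rewrite rsum_shift, rsum_shift, rsum_zero. simpl. replace (n-0)%nat with n by lia. lra.
  intros i Hi. simpl. lra. Qed.

Lemma coef_add f g n : fadd f g n = f n + g n. Proof. reflexivity. Qed.
Lemma coef_sub f g n : fsub f g n = f n - g n. Proof. reflexivity. Qed.

Lemma cst_add a b : cst (a + b) = fadd (cst a) (cst b).
Proof. apply fext; intros [|n]; unfold fadd, cst; lra. Qed.
Lemma cst_mul a b : cst (a * b) = fmul (cst a) (cst b).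
Proof. apply fext; intros n. rewrite coef_cst_mul. destruct n; unfold cst; lra. Qed.
Lemma cst_opp a : cst (- a) = fopp (cst a).
Proof. apply fext; intros [|n]; unfold fopp, cst; lra. Qed.
Lemma cst_sub a b : cst (a - b) = fsub (cst a) (cst b).
Proof. apply fext; intros [|n]; unfold fsub, cst; lra. Qed.

Definition pl (l : list R) : fps := fun n => nth n l 0.

Fixpoint padd (p q : list R) : list R :=
  match p, q with nil, _ => q | _, nil => p | a :: p', b :: q' => (a + b) :: padd p' q' end.
Fixpoint pmul (p q : list R) : list R :=
  match p with nil => nil | a :: p' => padd (map (Rmult a) q) (0 :: pmul p' q) end.
Definition popp (p : list R) := map Ropp p.

Lemma pl_nil : pl nil = f0.
Proof. apply fext; intros [|n]; reflexivity. Qed.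

Lemma pl_cons a l : pl (a :: l) = fadd (cst a) (fmul fX (pl l)).
Proof. apply fext; intros [|n]; rewrite coef_add.
  - rewrite coef_X_mul_0. unfold pl, cst. simpl. lra.
  - rewrite coef_X_mul_S. unfold pl, cst. simpl. lra. Qed.

Lemma pl_add p q : pl (padd p q) = fadd (pl p) (pl q).
Proof.
  revert q; induction p as [|a p IH]; intros q.
  - simpl. rewrite pl_nil. ring.
  - destruct q as [|b q].
    + simpl. rewrite pl_nil. ring.
    + simpl. rewrite !pl_cons, IH, cst_add. ring.
Qed.

Lemma pl_map a q : pl (map (Rmult a) q) = fmul (cst a) (pl q).
Proof.
  induction q as [|b q IH].
  - simpl. rewrite pl_nil. unfold f0. rewrite <- cst_mul. f_equal. lra.
  - simpl. rewrite !pl_cons, IH, cst_mul. ring.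
Qed.

Lemma pl_mul p q : pl (pmul p q) = fmul (pl p) (pl q).
Proof.
  induction p as [|a p IH].
  - simpl. rewrite pl_nil. apply fext; intro n. unfold fmul, f0, cst. rewrite rsum_zero. destruct n; lra.
    intros. destruct i; lra.
  - simpl. rewrite pl_add, pl_map, pl_cons, IH, pl_cons. replace (cst 0) with f0 by reflexivity. ring.
Qed.

Lemma pl_opp p : pl (popp p) = fopp (pl p).
Proof.
  induction p as [|a p IH].
  - simpl. rewrite pl_nil. ring.
  - simpl. rewrite !pl_cons. fold (popp p). rewrite IH, cst_opp. ring.
Qed.

Lemma pl_zero l : List.Forall (fun c : R => c = 0) l -> pl l = f0.
Proof. intros H; induction H as [|x l Hx Hl IH]; [apply pl_nil|]. rewrite pl_cons, IH, Hx. replace (cst 0) with f0 by reflexivity. ring. Qed.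

Lemma pl_single a : pl (a :: nil) = cst a.
Proof. rewrite pl_cons, pl_nil. replace f0 with (cst 0) by reflexivity. ring_simplify. 
  apply fext; intro n. unfold fadd, fmul. rewrite rsum_zero. unfold cst. destruct n; lra. intros. unfold cst. destruct (n - i)%nat; lra. Qed.

Definition gs (c : R) : fps := fun k => c ^ k.

Lemma gs_inv c : fmul (pl (1 :: - c :: nil)) (gs c) = f1.
Proof.
  rewrite pl_cons, pl_single. apply fext; intro n.
  replace (fmul (fadd (cst 1) (fmul fX (cst (- c)))) (gs c)) with
     (fadd (fmul (cst 1) (gs c)) (fmul (cst (-c)) (fmul fX (gs c)))) by ring.
  unfold fadd. rewrite !coef_cst_mul. destruct n.
  - rewrite coef_X_mul_0. unfold gs, f1, cst. simpl. lra.
  - rewrite coef_X_mul_S. unfold gs, f1, cst. simpl. lra.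
Qed.

Lemma inv_lin x : fmul (pl (1 :: x :: nil)) (gs (- x)) = f1.
Proof. rewrite <- (Ropp_involutive x) at 1. apply gs_inv. Qed.

Lemma inv_cst x : x <> 0 -> fmul (cst (/ x)) (pl (x :: nil)) = f1.
Proof. intros H. rewrite pl_single, <- cst_mul. unfold f1. f_equal. field. auto. Qed.

Fixpoint fprod (a k : nat) (F : nat -> fps) : fps :=
  match k with O => f1 | S k' => fmul (F a) (fprod (S a) k' F) end.

Lemma fprod_high a k F : fprod a (S k) F = fmul (fprod a k F) (F (a + k)%nat).
Proof.
  revert a; induction k; intros a.
  - simpl. rewrite Nat.add_0_r. ring.
  - change (fprod a (S (S k)) F) with (fmul (F a) (fprod (S a) (S k) F)).
    rewrite IHk. simpl. replace (S (a + k)) with (a + S k)%nat by lia. ring.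
Qed.

Lemma fprod_shift a k F : fprod (S a) k F = fprod a k (fun i => F (S i)).
Proof. revert a; induction k; intros a; simpl; auto. rewrite IHk. reflexivity. Qed.

Fixpoint fs (k : nat) (F : nat -> fps) : fps :=
  match k with O => f0 | S k' => fadd (fs k' F) (F k') end.

Lemma fs_low k F : fs (S k) F = fadd (F O) (fs k (fun i => F (S i))).
Proof. induction k; simpl in *. ring. rewrite IHk. ring. Qed.

Lemma fs_ext k F G : (forall i, (i < k)%nat -> F i = G i) -> fs k F = fs k G.
Proof. induction k; intros H; simpl; auto. rewrite IHk by (intros; apply H; lia). rewrite H by lia. auto. Qed.

Lemma fs_add k F G : fs k (fun i => fadd (F i) (G i)) = fadd (fs k F) (fs k G).
Proof. induction k; simpl. unfold f0. rewrite <- cst_add. f_equal. lra. rewrite IHk. ring. Qed.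

Lemma fs_scal k c F : fs k (fun i => fmul c (F i)) = fmul c (fs k F).
Proof. induction k; simpl. apply fext; intro n. unfold fmul, f0, cst. rewrite rsum_zero. destruct n; lra.
  intros. destruct (n - i)%nat; lra. rewrite IHk. ring. Qed.

Lemma fs_tele k G : fs k (fun i => fsub (G (S i)) (G i)) = fsub (G k) (G O).
Proof. induction k; simpl. apply fext; intros [|n]; unfold fsub, f0, cst; lra. rewrite IHk. ring. Qed.

Lemma fs_coef k F n : fs k F n = rsum k (fun i => F i n).
Proof. induction k; simpl. destruct n; reflexivity. rewrite coef_add, IHk. reflexivity. Qed.

Definition lin (x : R) : fps := pl (1 :: x :: nil).
Definition Pp (m : nat) : fps := fprod 1 (m - 1) (fun j => lin (/ INR j)).
Definition Us (m : nat) : fps := fmul (fmul (cst (/ (INR m ^ 2))) (Pp m)) (gs (- / INR m)).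
Definition Cs (N m : nat) : fps := fprod 0 m (fun i => gs (/ INR (N - i))).
Definition Fz (N m : nat) : fps := fmul (Us m) (Cs N m).
Definition Phi (N : nat) : fps := fs N (fun i => Fz N (S i)).
Definition beta (N : nat) : fps := fmul (gs (/ INR (S N))) (gs (- / INR (S N))).
Definition Bs (N : nat) : fps := fprod 1 N (fun j => fmul (gs (/ INR j)) (gs (- / INR j))).

Lemma lin_gs x : fmul (lin x) (gs (- x)) = f1.
Proof. apply inv_lin. Qed.
Lemma lin_gs' x : fmul (lin (- x)) (gs x) = f1.
Proof. apply gs_inv. Qed.

Lemma U_rel m : (1 <= m)%nat ->
  fmul (fmul (Us (S m)) (lin (/ INR (S m)))) (pl (INR (S m) ^ 2 :: nil)) =
  fmul (fmul (fmul (Us m) (lin (/ INR m))) (lin (/ INR m))) (pl (INR m ^ 2 :: nil)).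
Proof.
  intros Hm. unfold Us.
  assert (HP : Pp (S m) = fmul (Pp m) (lin (/ INR m))).
  { unfold Pp. replace (S m - 1)%nat with (S (m - 1)) by lia. rewrite fprod_high.
    replace (1 + (m - 1))%nat with m by lia. reflexivity. }
  rewrite HP.
  assert (H1 := lin_gs (/ INR (S m))). assert (H2 := lin_gs (/ INR m)).
  assert (H3 : fmul (cst (/ (INR (S m) ^ 2))) (pl (INR (S m) ^ 2 :: nil)) = f1).
  { apply inv_cst. apply pow_nonzero. apply not_0_INR. lia. }
  assert (H4 : fmul (cst (/ (INR m ^ 2))) (pl (INR m ^ 2 :: nil)) = f1).
  { apply inv_cst. apply pow_nonzero. apply not_0_INR. lia. }
  transitivity (fmul (fmul (fmul (Pp m) (lin (/ INR m)))
    (fmul (cst (/ (INR (S m) ^ 2))) (pl (INR (S m) ^ 2 :: nil))))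
    (fmul (lin (/ INR (S m))) (gs (- / INR (S m))))). ring.
  rewrite H1, H3.
  transitivity (fmul (fmul (fmul (Pp m) (lin (/ INR m)))
    (fmul (cst (/ (INR m ^ 2))) (pl (INR m ^ 2 :: nil))))
    (fmul (lin (/ INR m)) (gs (- / INR m)))). 2: ring.
  rewrite H2, H4. ring.
Qed.

Lemma C_high N m : fmul (Cs N (S m)) (lin (- / INR (N - m))) = Cs N m.
Proof.
  unfold Cs. rewrite fprod_high. simpl (0 + m)%nat.
  rewrite <- fmul_assoc. rewrite (fmul_comm (gs _)). rewrite lin_gs'. ring.
Qed.

Lemma C_low N m : fmul (Cs (S N) (S m)) (lin (- / INR (S N))) = Cs N m.
Proof.
  unfold Cs. change (fprod 0 (S m) ?F) with (fmul (F 0%nat) (fprod 1 m F)). rewrite fprod_shift.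
  replace (S N - 0)%nat with (S N) by lia.
  change (fprod 0 m (fun i => gs (/ INR (S N - S i)))) with (fprod 0 m (fun i => gs (/ INR (N - i)))).
  transitivity (fmul (fmul (lin (- / INR (S N))) (gs (/ INR (S N)))) (fprod 0 m (fun i => gs (/ INR (N - i))))). ring.
  rewrite lin_gs'. ring.
Qed.

Lemma beta_rel N : fmul (fmul (beta N) (lin (- / INR (S N)))) (lin (/ INR (S N))) = f1.
Proof.
  unfold beta. transitivity (fmul (fmul (lin (- / INR (S N))) (gs (/ INR (S N)))) (fmul (lin (/ INR (S N))) (gs (- / INR (S N))))). ring.
  rewrite lin_gs, lin_gs'. ring.
Qed.

Definition Rw (N m : nat) : fps :=
  fmul (fmul (pl (INR m / (INR (S N) ^ 2 * (INR (S N) - INR m)) :: nil)) (pl (INR m :: 1 :: nil)))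
       (pl (INR m - INR N - 1 :: 1 :: nil)).
Definition gW (N m : nat) : fps := fmul (Rw N m) (Fz N m).

Definition Lq (n x : R) : list R :=
  let p5 := 1 :: - / (n - x) :: nil in
  let p2 := 1 :: / (n + 1) :: nil in
  let p3 := 1 :: / (x + 2) :: nil in
  let p4 := 1 :: - / (n - x - 1) :: nil in
  let P1 := (x + 2) ^ 2 :: nil in
  let p6 := 1 :: / (x + 1) :: nil in
  let Pm := (x + 1) ^ 2 :: nil in
  let R1 := pmul (pmul ((x + 1) / ((n + 1) ^ 2 * ((n + 1) - (x + 1))) :: nil) (x + 1 :: 1 :: nil))
                 (x + 1 - n - 1 :: 1 :: nil) in
  let R2 := pmul (pmul ((x + 2) / ((n + 1) ^ 2 * ((n + 1) - (x + 2))) :: nil) (x + 2 :: 1 :: nil))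
                 (x + 2 - n - 1 :: 1 :: nil) in
  padd (padd (padd (pmul p5 (pmul p2 (pmul p3 (pmul p4 P1)))) (popp (pmul p3 (pmul p4 P1))))
             (popp (pmul R2 (pmul p6 (pmul p6 Pm))))) (pmul R1 (pmul p3 (pmul p4 P1))).

Lemma Lq_zero n x : n + 1 <> 0 -> n - x <> 0 -> n - x - 1 <> 0 -> x + 2 <> 0 -> x + 1 <> 0 ->
  pl (Lq n x) = f0.
Proof.
  intros H1 H2 H3 H4 H5. apply pl_zero. unfold Lq. simpl.
  assert (E1 : n + 1 - (x + 1) <> 0) by (intro; apply H2; lra).
  assert (E2 : n + 1 - (x + 2) <> 0) by (intro; apply H3; lra).
  repeat constructor; field; auto.
Qed.

Lemma inv_cst2 x : x <> 0 -> fmul (pl (x :: nil)) (pl (/ x :: nil)) = f1.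
Proof. intros H. rewrite !pl_single, <- cst_mul. unfold f1. f_equal. field. auto. Qed.

Lemma fcancel (G M Mi : fps) : fmul M Mi = f1 -> fmul G M = f0 -> G = f0.
Proof. intros H1 H2. transitivity (fmul (fmul G M) Mi). rewrite <- fmul_assoc, H1. ring. rewrite H2. ring. Qed.

Lemma WZ_interior N k : (k + 2 <= N)%nat ->
  fsub (fsub (Fz (S N) (S k)) (fmul (beta N) (Fz N (S k))))
       (fmul (beta N) (fsub (gW N (S (S k))) (gW N (S k)))) = f0.
Proof.
  intros Hk. set (m := S k).
  set (K := Fz N m).
  set (p1 := lin (- / INR (S N))). set (p2 := lin (/ INR (S N))).
  set (p3 := lin (/ INR (S m))). set (p4 := lin (- / INR (N - m))).
  set (P1 := pl (INR (S m) ^ 2 :: nil)).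
  set (p5 := lin (- / INR (N - k))). set (p6 := lin (/ INR m)). set (Pm := pl (INR m ^ 2 :: nil)).
  assert (Ha : fmul (Fz (S N) m) p1 = fmul K p5).
  { unfold K, Fz, p1, p5, m. rewrite <- fmul_assoc, C_low. rewrite <- fmul_assoc, C_high. reflexivity. }
  assert (Hb : fmul (fmul (fmul (Fz N (S m)) p3) p4) P1 = fmul (fmul (fmul K p6) p6) Pm).
  { unfold K, Fz, p3, p4, P1, p6, Pm.
    transitivity (fmul (fmul (fmul (Us (S m)) (lin (/ INR (S m)))) (pl (INR (S m) ^ 2 :: nil)))
                  (fmul (Cs N (S m)) (lin (- / INR (N - m))))). ring.
    rewrite C_high, U_rel by (unfold m; lia). ring. }
  assert (Hc := beta_rel N). fold p1 p2 in Hc.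
  apply (fcancel _ (fmul (fmul (fmul (fmul p1 p2) p3) p4) P1)
     (fmul (fmul (fmul (fmul (gs (/ INR (S N))) (gs (- / INR (S N)))) (gs (- / INR (S m))))
        (gs (/ INR (N - m)))) (pl (/ (INR (S m) ^ 2) :: nil)))).
  { transitivity (fmul (fmul (fmul (fmul (fmul p1 (gs (/ INR (S N)))) (fmul p2 (gs (- / INR (S N)))))
       (fmul p3 (gs (- / INR (S m))))) (fmul p4 (gs (/ INR (N - m)))))
       (fmul P1 (pl (/ (INR (S m) ^ 2) :: nil)))). ring.
    unfold p1, p2, p3, p4, P1. rewrite lin_gs, lin_gs'. rewrite (lin_gs (/ INR (S m))).
    rewrite (lin_gs' (/ INR (N - m))). rewrite inv_cst2. ring. apply pow_nonzero, not_0_INR. lia. }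
  unfold gW. fold K.
  transitivity (fsub (fsub (fadd (fmul (fmul (Fz (S N) m) p1) (fmul (fmul (fmul p2 p3) p4) P1))
      (fmul (fmul (fmul (beta N) p1) p2) (fmul (Rw N m) (fmul K (fmul (fmul p3 p4) P1)))))
      (fmul (fmul (fmul (beta N) p1) p2) (fmul K (fmul (fmul p3 p4) P1))))
      (fmul (fmul (fmul (beta N) p1) p2) (fmul (Rw N (S m)) (fmul (fmul (fmul (Fz N (S m)) p3) p4) P1)))).
  ring.
  rewrite Ha, Hb, Hc.
  transitivity (fmul K (pl (Lq (INR N) (INR k)))).
  2:{ rewrite Lq_zero. ring.
      - rewrite <- S_INR. apply not_0_INR. lia.
      - rewrite <- minus_INR by lia. apply not_0_INR. lia.
      - replace (INR N - INR k - 1) with (INR (N - k - 1)) by (rewrite !minus_INR by lia; simpl; lra). apply not_0_INR. lia.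
      - pose proof (pos_INR k). lra.
      - pose proof (pos_INR k). lra. }
  unfold Lq. rewrite !pl_add, !pl_opp, !pl_mul. unfold p1, p2, p3, p4, p5, p6, P1, Pm, Rw, lin, m.
  rewrite !minus_INR by lia. rewrite !S_INR.
  replace (INR k + 1 + 1) with (INR k + 2) by ring.
  replace (INR N - (INR k + 1)) with (INR N - INR k - 1) by ring.
  ring.
Qed.

Definition Lb (n : R) : list R :=
  let p6 := 1 :: / n :: nil in
  let Pm := n ^ 2 :: nil in
  let p5 := 1 :: - / 1 :: nil in
  let p2 := 1 :: / (n + 1) :: nil in
  let P1 := (n + 1) ^ 2 :: nil in
  let Rn := pmul (pmul (n / ((n + 1) ^ 2 * ((n + 1) - n)) :: nil) (n :: 1 :: nil)) (n - n - 1 :: 1 :: nil) in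
  padd (padd (padd (pmul p6 (pmul p6 Pm)) (pmul p5 (pmul p2 P1))) (popp P1)) (pmul Rn P1).

Lemma Lb_zero n : n <> 0 -> n + 1 <> 0 -> pl (Lb n) = f0.
Proof.
  intros H1 H2. apply pl_zero. unfold Lb. simpl.
  assert (H3 : n + 1 - n <> 0) by (intro; lra).
  repeat constructor; field; auto.
Qed.

Lemma WZ_boundary k : let N := S k in
  fadd (fsub (fadd (Fz (S N) (S N)) (Fz (S N) N)) (fmul (beta N) (Fz N N))) (fmul (beta N) (gW N N)) = f0.
Proof.
  intros N.
  set (K := Fz N N).
  set (p1 := lin (- / INR (S N))). set (p2 := lin (/ INR (S N))).
  set (P1 := pl (INR (S N) ^ 2 :: nil)).
  set (p5 := lin (- / INR (N - k))). set (p6 := lin (/ INR N)). set (Pm := pl (INR N ^ 2 :: nil)).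
  assert (Ha : fmul (Fz (S N) N) p1 = fmul K p5).
  { unfold K, Fz, p1, p5, N. rewrite <- fmul_assoc, C_low. rewrite <- fmul_assoc, C_high. reflexivity. }
  assert (Hb : fmul (fmul (fmul (Fz (S N) (S N)) p1) p2) P1 = fmul (fmul (fmul K p6) p6) Pm).
  { unfold K, Fz, p2, p1, P1, p6, Pm.
    transitivity (fmul (fmul (fmul (Us (S N)) (lin (/ INR (S N)))) (pl (INR (S N) ^ 2 :: nil)))
                  (fmul (Cs (S N) (S N)) (lin (- / INR (S N))))). ring.
    rewrite C_low, U_rel by (unfold N; lia). ring. }
  assert (Hc := beta_rel N). fold p1 p2 in Hc.
  apply (fcancel _ (fmul (fmul p1 p2) P1)
     (fmul (fmul (gs (/ INR (S N))) (gs (- / INR (S N)))) (pl (/ (INR (S N) ^ 2) :: nil)))).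
  { transitivity (fmul (fmul (fmul p1 (gs (/ INR (S N)))) (fmul p2 (gs (- / INR (S N)))))
       (fmul P1 (pl (/ (INR (S N) ^ 2) :: nil)))). ring.
    unfold p1, p2, P1. rewrite lin_gs, lin_gs'. rewrite inv_cst2. ring. apply pow_nonzero, not_0_INR. lia. }
  unfold gW. fold K.
  transitivity (fsub (fadd (fadd (fmul (fmul (fmul (Fz (S N) (S N)) p1) p2) P1)
      (fmul (fmul (Fz (S N) N) p1) (fmul p2 P1)))
      (fmul (fmul (fmul (beta N) p1) p2) (fmul (Rw N N) (fmul K P1))))
      (fmul (fmul (fmul (beta N) p1) p2) (fmul K P1))).
  ring.
  rewrite Ha, Hb, Hc.
  transitivity (fmul K (pl (Lb (INR N)))).
  2:{ rewrite Lb_zero. ring.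
      - apply not_0_INR. unfold N; lia.
      - rewrite <- S_INR. apply not_0_INR. lia. }
  unfold Lb. rewrite !pl_add, !pl_opp, !pl_mul. unfold p1, p2, p5, p6, P1, Pm, Rw, lin.
  replace (N - k)%nat with 1%nat by (unfold N; lia).
  change (INR 1) with 1. rewrite !S_INR.
  match goal with |- ?a = ?b => change (@eq fps a b) end.
  ring.
Qed.

Lemma pl_single_mul a b : fmul (pl (a :: nil)) (pl (b :: nil)) = pl (a * b :: nil).
Proof. rewrite !pl_single, cst_mul. reflexivity. Qed.

Lemma gW_1 N : (1 <= N)%nat -> gW N 1 = pl (- / (INR (S N) ^ 2) :: nil).
Proof.
  intros HN. unfold gW, Fz, Us, Cs, Pp, Rw. simpl (1 - 1)%nat. simpl fprod.
  replace (N - 0)%nat with N by lia. change (INR 1) with 1.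
  assert (Hn : INR N <> 0) by (apply not_0_INR; lia).
  assert (Hn1 : INR (S N) <> 0) by (apply not_0_INR; lia).
  replace (pl (1 - INR N - 1 :: 1 :: nil)) with (fmul (pl (- INR N :: nil)) (lin (- / INR N))).
  2:{ unfold lin. rewrite <- pl_mul. f_equal. simpl. f_equal. field. auto. f_equal. field. auto. }
  assert (H1 := lin_gs 1). assert (H2 := lin_gs' (/ INR N)).
  unfold lin in H1, H2. replace (/ 1) with 1 by field.
  transitivity (fmul (fmul (fmul (pl (1 / (INR (S N) ^ 2 * (INR (S N) - 1)) :: nil)) (pl (- INR N :: nil)))
     (fmul (pl (1 :: 1 :: nil)) (gs (- (1))))) (fmul (pl (1 :: - / INR N :: nil)) (gs (/ INR N)))).
  { replace (/ (1 ^ 2)) with 1 by field. replace (cst 1) with f1 by reflexivity. unfold lin. fring. }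
  rewrite H1, H2, pl_single_mul.
  transitivity (pl (1 / (INR (S N) ^ 2 * (INR (S N) - 1)) * - INR N :: nil)). fring.
  rewrite S_INR. f_equal. f_equal. field.
  rewrite S_INR in Hn1. repeat split; auto. replace (INR N + 1 - 1) with (INR N) by ring. auto.
Qed.

Lemma wz_eq x a b : fsub (fsub x a) b = f0 -> x = fadd a b.
Proof. intros H. transitivity (fadd (fsub (fsub x a) b) (fadd a b)). fring. rewrite H. fring. Qed.

Lemma Phi_step N : Phi (S N) = fmul (beta N) (fadd (Phi N) (pl (/ (INR (S N) ^ 2) :: nil))).
Proof.
  destruct N as [|k].
  - unfold Phi, beta, Fz, Us, Cs, Pp. simpl fs. simpl (1 - 1)%nat. simpl fprod. simpl (1 - 0)%nat.
    change (INR 1) with 1. rewrite pl_single. replace (cst (/ 1 ^ 2)) with f1 by (unfold f1; f_equal; field).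
    replace (/ 1) with 1 by field. replace (/ (1 * (1 * 1))) with 1 by field. replace (cst 1) with f1 by reflexivity. fring.
  - set (N := S k).
    assert (Hint : forall i, (i < k)%nat -> Fz (S N) (S i) =
        fadd (fmul (beta N) (Fz N (S i))) (fmul (beta N) (fsub (gW N (S (S i))) (gW N (S i))))).
    { intros i Hi. apply wz_eq. apply WZ_interior. unfold N; lia. }
    assert (Hb := WZ_boundary k). fold N in Hb.
    unfold Phi. change (fs (S N) ?F) with (fadd (fs N F) (F N)). unfold N at 1.
    change (fs (S k) ?F) with (fadd (fs k F) (F k)). fold N.
    change (fs N (fun i => Fz N (S i))) with (fs (S k) (fun i => Fz N (S i))).
    change (fs (S k) ?F) with (fadd (fs k F) (F k)). fold N.
    rewrite (fs_ext k _ _ Hint). rewrite fs_add, fs_scal, fs_scal.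
    rewrite (fs_tele k (fun i => gW N (S i))).
    rewrite (gW_1 N) by (unfold N; lia). rewrite !pl_single, cst_opp.
    transitivity (fadd (fmul (beta N) (fadd (fadd (fs k (fun i => Fz N (S i))) (Fz N N)) (cst (/ INR (S N) ^ 2))))
       (fadd (fsub (fadd (Fz (S N) (S N)) (Fz (S N) N)) (fmul (beta N) (Fz N N))) (fmul (beta N) (gW N N)))).
    2:{ rewrite Hb. unfold N. fring. }
    unfold N. fring.
Qed.

Definition XX : fps := fmul fX fX.

Lemma lin_pair a : fmul (lin (- a)) (lin a) = fsub f1 (fmul XX (pl (a * a :: nil))).
Proof.
  unfold lin. rewrite <- pl_mul.
  replace (pmul (1 :: - a :: nil) (1 :: a :: nil)) with (1 :: 0 :: - (a * a) :: nil).
  2:{ simpl. f_equal; [ring|]. f_equal; [ring|]. f_equal; ring. }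
  rewrite !pl_cons, pl_nil, cst_opp. unfold XX, f1, f0.
  replace (cst 0) with f0 by reflexivity. fring.
Qed.

Lemma Saal N : fmul XX (Phi N) = fsub (Bs N) f1.
Proof.
  induction N.
  - unfold Phi, Bs. simpl. fring.
  - rewrite Phi_step.
    assert (HB : Bs (S N) = fmul (Bs N) (beta N)).
    { unfold Bs. rewrite fprod_high. reflexivity. }
    rewrite HB.
    assert (Hc := beta_rel N). rewrite <- fmul_assoc, lin_pair in Hc.
    replace (pl (/ INR (S N) ^ 2 :: nil)) with (pl (/ INR (S N) * / INR (S N) :: nil)).
    2:{ f_equal. f_equal. field. apply not_0_INR. lia. }
    transitivity (fadd (fmul (beta N) (fmul XX (Phi N))) (fmul (beta N) (fmul XX (pl (/ INR (S N) * / INR (S N) :: nil))))).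
    fring. rewrite IHN.
    transitivity (fsub (fmul (Bs N) (beta N)) (fmul (beta N) (fsub f1 (fmul XX (pl (/ INR (S N) * / INR (S N) :: nil)))))).
    fring. rewrite Hc. fring.
Qed.

Lemma sr_rsum a b f : sum_range a b f = rsum (S b - a) (fun i => f (a + i)%nat).
Proof.
  unfold sum_range. generalize (S b - a)%nat as k. intros k. revert a. induction k; intros a.
  - reflexivity.
  - simpl seq. simpl map. simpl fold_right. rewrite IHk. rewrite rsum_shift.
    rewrite Nat.add_0_r. f_equal. apply rsum_ext. intros i Hi. f_equal. lia.
Qed.

Lemma sr0 n f : sum_range 0 n f = rsum (S n) f.
Proof. rewrite sr_rsum. rewrite Nat.sub_0_r. apply rsum_ext. intros; reflexivity. Qed.

Lemma mzv_split a s lo N : (lo < N)%nat ->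
  mzv_part (a :: s) lo N = / (INR (S lo) ^ a) * mzv_part s (S lo) N + mzv_part (a :: s) (S lo) N.
Proof.
  intros H. simpl mzv_part. unfold sum_range.
  replace (S N - S lo)%nat with (S (N - S lo)) by lia.
  replace (S N - S (S lo))%nat with (N - S lo)%nat by lia. reflexivity.
Qed.

Lemma mzv_end a s N : mzv_part (a :: s) N N = 0.
Proof. simpl mzv_part. unfold sum_range. rewrite Nat.sub_diag. reflexivity. Qed.

Lemma mzsv_split a s lo N : (lo <= N)%nat ->
  mzsv_part (a :: s) lo N = / (INR lo ^ a) * mzsv_part s lo N + mzsv_part (a :: s) (S lo) N.
Proof.
  intros H. simpl mzsv_part. unfold sum_range.
  replace (S N - lo)%nat with (S (N - lo)) by lia.
  replace (S N - S lo)%nat with (N - lo)%nat by lia. reflexivity.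
Qed.

Lemma mzsv_end a s N : mzsv_part (a :: s) (S N) N = 0.
Proof. simpl mzsv_part. unfold sum_range. rewrite Nat.sub_diag. reflexivity. Qed.

Lemma lin_mul_eq b f : fmul (lin b) f = fadd f (fmul (cst b) (fmul fX f)).
Proof. unfold lin. rewrite !pl_cons, pl_nil. replace (cst 1) with f1 by reflexivity. fring. Qed.

Lemma coef_lin_0 b f : fmul (lin b) f O = f O.
Proof. rewrite lin_mul_eq, coef_add, coef_cst_mul, coef_X_mul_0. ring. Qed.
Lemma coef_lin_S b f n : fmul (lin b) f (S n) = f (S n) + b * f n.
Proof. rewrite lin_mul_eq, coef_add, coef_cst_mul, coef_X_mul_S. ring. Qed.

Fixpoint Yc (lo k : nat) : fps :=
  match k with
  | O => f0
  | S k' => fadd (fmul (cst (/ (INR (S lo) ^ 2))) (gs (- / INR (S lo)))) (fmul (lin (/ INR (S lo))) (Yc (S lo) k'))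
  end.

Lemma Yc_sum lo k : Yc lo k = fs k (fun i => fmul (fmul (cst (/ (INR (S lo + i) ^ 2)))
          (fprod (S lo) i (fun j => lin (/ INR j)))) (gs (- / INR (S lo + i)))).
Proof.
  revert lo; induction k; intros lo.
  - reflexivity.
  - cbn [Yc]. rewrite IHk. rewrite fs_low. rewrite Nat.add_0_r. cbn [fprod].
    rewrite <- fs_scal. f_equal. fring. apply fs_ext. intros i Hi.
    replace (S lo + S i)%nat with (S (S lo) + i)%nat by lia. cbn [fprod]. fring.
Qed.

Lemma Yc_Us N : Yc 0 N = fs N (fun i => Us (S i)).
Proof. rewrite Yc_sum. apply fs_ext. intros i Hi. unfold Us, Pp. simpl (S i - 1)%nat. rewrite Nat.sub_0_r. reflexivity. Qed.

Definition yv (N lo n : nat) : R :=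
  sum_range 0 n (fun r => (-1) ^ (r + n) * mzv_part (repeat 1%nat r ++ (n + 2 - r)%nat :: nil) lo N).

Lemma pow_aux L k : L <> 0 -> / (L ^ 2) * (- / L) ^ k = (-1) ^ k * / (L ^ (k + 2)).
Proof.
  intros HL. induction k.
  - simpl. field. auto.
  - replace (S k + 2)%nat with (S (k + 2)) by lia.
    change ((- / L) ^ S k) with (- / L * (- / L) ^ k).
    change (L ^ S (k + 2)) with (L * L ^ (k + 2)).
    change ((-1) ^ S k) with (-1 * (-1) ^ k).
    assert (L ^ (k + 2) <> 0) by (apply pow_nonzero; auto).
    replace (/ L ^ 2 * (- / L * (- / L) ^ k)) with (- / L * (/ L ^ 2 * (- / L) ^ k)) by ring.
    rewrite IHk. field. split; auto.
Qed.

Lemma yv_rec N lo n : (lo < N)%nat ->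
  yv N lo n = / (INR (S lo) ^ 2) * (- / INR (S lo)) ^ n + yv N (S lo) n +
     match n with O => 0 | S n' => / INR (S lo) * yv N (S lo) n' end.
Proof.
  intros Hlo. unfold yv. rewrite !sr0.
  assert (HL : INR (S lo) <> 0) by (apply not_0_INR; lia).
  destruct n as [|n].
  - rewrite !rsum_1. change (repeat 1%nat 0 ++ (0 + 2 - 0)%nat :: nil) with (2%nat :: nil).
    rewrite mzv_split by auto. change (mzv_part nil (S lo) N) with 1.
    replace ((-1) ^ (0 + 0)) with 1 by (simpl; ring). rewrite pow_O. ring.
  - rewrite sr0. rewrite (rsum_shift (S n)). rewrite (rsum_shift (S n) (fun r => (-1) ^ (r + S n) * mzv_part (repeat 1%nat r ++ (S n + 2 - r)%nat :: nil) (S lo) N)).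
    simpl (repeat 1%nat 0). simpl app. rewrite mzv_split by auto. simpl (mzv_part nil (S lo) N).
    rewrite pow_aux by auto. replace (S n + 2)%nat with (S (n + 2)) by lia.
    rewrite (rsum_ext (S n) (fun i => (-1) ^ (S i + S n) * mzv_part (1%nat :: repeat 1%nat i ++ (n + 2 - i)%nat :: nil) lo N)
      (fun i => (-1) ^ (S i + S n) * mzv_part (1%nat :: repeat 1%nat i ++ (n + 2 - i)%nat :: nil) (S lo) N
         + / INR (S lo) * ((-1) ^ (i + n) * mzv_part (repeat 1%nat i ++ (n + 2 - i)%nat :: nil) (S lo) N))).
    + rewrite rsum_plus, rsum_scal. replace (0 + S n)%nat with (S n) by lia. ring.
    + intros i Hi. rewrite mzv_split by auto.
      replace (S i + S n)%nat with (S (S (i + n))) by lia. replace ((-1) ^ (S (S (i + n)))) with ((-1) ^ (i + n)) by (simpl; ring). rewrite pow_1. ring.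
Qed.

Lemma Yc_coef N k lo : (lo + k = N)%nat -> forall n, Yc lo k n = yv N lo n.
Proof.
  revert lo; induction k; intros lo Hk n.
  - rewrite Nat.add_0_r in Hk. subst lo. simpl Yc. unfold yv. rewrite sr0. rewrite rsum_zero.
    destruct n; reflexivity.
    intros i Hi. destruct i; cbn [repeat app]; rewrite mzv_end; ring.
  - cbn [Yc]. rewrite coef_add, coef_cst_mul. rewrite yv_rec by lia.
    destruct n as [|n].
    + rewrite coef_lin_0, IHk by lia. unfold gs. ring.
    + rewrite coef_lin_S, !IHk by lia. unfold gs. ring.
Qed.

Definition SV (N lo : nat) : fps := fun n =>
  if Nat.even n then mzsv_part (repeat 2%nat (Nat.div2 n)) lo N else 0.

Lemma coef_XX_0 f : fmul XX f O = 0.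
Proof. unfold XX. rewrite <- fmul_assoc, coef_X_mul_0. reflexivity. Qed.
Lemma coef_XX_1 f : fmul XX f 1%nat = 0.
Proof. unfold XX. rewrite <- fmul_assoc, coef_X_mul_S, coef_X_mul_0. reflexivity. Qed.
Lemma coef_XX_SS f n : fmul XX f (S (S n)) = f n.
Proof. unfold XX. rewrite <- fmul_assoc, !coef_X_mul_S. reflexivity. Qed.

Lemma SV_step N lo : (1 <= lo <= N)%nat ->
  fmul (fmul (lin (- / INR lo)) (lin (/ INR lo))) (SV N lo) = SV N (S lo).
Proof.
  intros Hlo. rewrite lin_pair. apply fext; intro n.
  assert (Eq : fmul (fsub f1 (fmul XX (pl (/ INR lo * / INR lo :: nil)))) (SV N lo) =
     fsub (SV N lo) (fmul XX (fmul (pl (/ INR lo * / INR lo :: nil)) (SV N lo)))) by fring.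
  rewrite Eq, coef_sub.
  assert (HL : INR lo <> 0) by (apply not_0_INR; lia).
  destruct n as [|[|n]].
  - rewrite coef_XX_0. unfold SV. simpl. ring.
  - rewrite coef_XX_1. unfold SV. simpl. ring.
  - rewrite coef_XX_SS, pl_single, coef_cst_mul. unfold SV.
    change (Nat.even (S (S n))) with (Nat.even n). change (Nat.div2 (S (S n))) with (S (Nat.div2 n)).
    destruct (Nat.even n).
    + change (repeat 2%nat (S (Nat.div2 n))) with (2%nat :: repeat 2%nat (Nat.div2 n)).
      rewrite mzsv_split by lia. field. auto.
    + ring.
Qed.

Lemma SV_base N : SV N (S N) = f1.
Proof.
  apply fext; intro n. unfold SV, f1, cst. destruct n as [|[|n]].
  - reflexivity.
  - reflexivity.
  - change (Nat.even (S (S n))) with (Nat.even n). change (Nat.div2 (S (S n))) with (S (Nat.div2 n)).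
    destruct (Nat.even n); [|reflexivity].
    change (repeat 2%nat (S (Nat.div2 n))) with (2%nat :: repeat 2%nat (Nat.div2 n)). apply mzsv_end.
Qed.

Lemma Bs_SV_gen N k lo : (1 <= lo)%nat -> (lo + k = S N)%nat ->
  fprod lo k (fun j => fmul (gs (/ INR j)) (gs (- / INR j))) = SV N lo.
Proof.
  revert lo; induction k; intros lo H1 H2.
  - rewrite Nat.add_0_r in H2. subst lo. rewrite SV_base. reflexivity.
  - cbn [fprod]. rewrite IHk by lia. rewrite <- (SV_step N lo) by lia.
    transitivity (fmul (fmul (fmul (lin (- / INR lo)) (gs (/ INR lo))) (fmul (lin (/ INR lo)) (gs (- / INR lo)))) (SV N lo)).
    fring. rewrite lin_gs, lin_gs'. fring.
Qed.

Lemma Bs_SV N : Bs N = SV N 1.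
Proof. unfold Bs. apply Bs_SV_gen; lia. Qed.

Definition Err (N : nat) : fps := fs N (fun i => fmul (Us (S i)) (fsub (Cs N (S i)) f1)).

Lemma coef_main N n : SV N 1 (n + 2)%nat = yv N 0 n + Err N n.
Proof.
  rewrite <- Bs_SV.
  assert (H := Saal N).
  assert (E : Phi N = fadd (Yc 0 N) (Err N)).
  { unfold Phi, Err, Fz. rewrite Yc_Us, <- fs_add. apply fs_ext. intros i Hi. fring. }
  replace (Bs N (n + 2)%nat) with (fsub (Bs N) f1 (n + 2)%nat).
  2:{ rewrite coef_sub. unfold f1, cst. replace (n + 2)%nat with (S (S n)) by lia. ring. }
  rewrite <- H. replace (n + 2)%nat with (S (S n)) by lia. rewrite coef_XX_SS, E, coef_add.
  rewrite (Yc_coef N N 0) by lia. reflexivity.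
Qed.

Definition dom (f : fps) (a : R) : Prop := forall k, Rabs (f k) <= a ^ k.
Definition nn (f : fps) : Prop := forall k, 0 <= f k.

Lemma binom_le a b k : 0 <= a -> 0 <= b ->
  rsum (S k) (fun i => a ^ i * b ^ (k - i)%nat) <= (a + b) ^ k.
Proof.
  intros Ha Hb. induction k.
  - simpl. lra.
  - rewrite rsum_S. 
    rewrite (rsum_ext (S k) (fun i => a ^ i * b ^ (S k - i)%nat) (fun i => b * (a ^ i * b ^ (k - i)%nat))).
    2:{ intros i Hi. replace (S k - i)%nat with (S (k - i)) by lia. simpl. ring. }
    rewrite rsum_scal. replace (S k - S k)%nat with O by lia.
    assert (a ^ S k <= a * (a + b) ^ k).
    { simpl. apply Rmult_le_compat_l; auto. apply pow_incr. lra. }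
    assert (b * rsum (S k) (fun i => a ^ i * b ^ (k - i)%nat) <= b * (a + b) ^ k) by (apply Rmult_le_compat_l; auto).
    rewrite pow_O. change ((a + b) ^ S k) with ((a + b) * (a + b) ^ k). lra.
Qed.

Lemma dom_mul f g a b : 0 <= a -> 0 <= b -> dom f a -> dom g b -> dom (fmul f g) (a + b).
Proof.
  intros Ha Hb Hf Hg k. unfold fmul. eapply Rle_trans; [apply rsum_abs|].
  eapply Rle_trans; [|apply (binom_le a b k Ha Hb)]. apply rsum_le. intros i Hi.
  rewrite Rabs_mult. apply Rmult_le_compat; auto using Rabs_pos.
Qed.

Lemma dom_le f a a' : dom f a -> 0 <= a -> a <= a' -> dom f a'.
Proof. intros H Ha Ha' k. eapply Rle_trans; [apply H|]. apply pow_incr. lra. Qed.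

Lemma dom_lin b : dom (lin b) (Rabs b).
Proof.
  intros [|[|k]]; unfold lin, pl.
  - cbn [nth]. rewrite Rabs_R1, pow_O. lra.
  - cbn [nth]. rewrite pow_1. lra.
  - cbn [nth]. destruct k; rewrite Rabs_R0; apply pow_le, Rabs_pos.
Qed.

Lemma dom_gs c : dom (gs c) (Rabs c).
Proof. intros k. unfold gs. rewrite <- RPow_abs. lra. Qed.

Lemma dom_f1 : dom f1 0.
Proof. intros [|k]; unfold f1, cst; simpl. rewrite Rabs_R1; lra. rewrite Rabs_R0; lra. Qed.

Lemma dom_fprod a k F b : (forall i, 0 <= b i) -> (forall i, (i < k)%nat -> dom (F (a + i)%nat) (b (a + i)%nat)) ->
  dom (fprod a k F) (rsum k (fun i => b (a + i)%nat)).
Proof.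
  revert a; induction k; intros a Hb HF.
  - simpl. apply dom_f1.
  - cbn [fprod]. rewrite rsum_shift. rewrite Nat.add_0_r.
    apply dom_mul.
    + apply Hb.
    + apply (Rle_trans _ (rsum k (fun _ => 0))). rewrite rsum_zero; auto; lra. apply rsum_le. intros; auto.
    + specialize (HF O). rewrite Nat.add_0_r in HF. apply HF. lia.
    + rewrite (rsum_ext k (fun i => b (a + S i)%nat) (fun i => b (S a + i)%nat)) by (intros; f_equal; lia).
      apply IHk; auto. intros i Hi. replace (S a + i)%nat with (a + S i)%nat by lia. apply HF. lia.
Qed.

Lemma nn_mul f g : nn f -> nn g -> nn (fmul f g).
Proof. intros Hf Hg k. unfold fmul. apply (Rle_trans _ (rsum (S k) (fun _ => 0))). rewrite rsum_zero; auto; lra.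
  apply rsum_le. intros. apply Rmult_le_pos; auto. Qed.

Lemma nn_gs c : 0 <= c -> nn (gs c).
Proof. intros H k. unfold gs. apply pow_le; auto. Qed.

Lemma nn_fprod a k F : (forall i, nn (F i)) -> nn (fprod a k F).
Proof. revert a; induction k; intros a H. intros [|j]; unfold f1, cst; simpl; lra. cbn [fprod]. apply nn_mul; auto. Qed.

Lemma coef0_mul f g : fmul f g O = f O * g O.
Proof. unfold fmul. simpl. ring. Qed.

Lemma coef0_fprod a k F : (forall i, F i O = 1) -> fprod a k F O = 1.
Proof. revert a; induction k; intros a H. reflexivity. cbn [fprod]. rewrite coef0_mul, H, IHk; auto. ring. Qed.

Definition Hn (N : nat) : R := rsum N (fun i => / INR (S i)).
Definition sig (N m : nat) : R := rsum m (fun i => / INR (N - i)).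

Lemma inv_INR_nonneg j : 0 <= / INR j.
Proof. destruct j. simpl. rewrite Rinv_0. lra. apply Rlt_le, Rinv_0_lt_compat, lt_0_INR. lia. Qed.

Lemma rsum_nonneg k f : (forall i, 0 <= f i) -> 0 <= rsum k f.
Proof. intros H. apply (Rle_trans _ (rsum k (fun _ => 0))). rewrite rsum_zero; auto; lra. apply rsum_le; auto. Qed.

Lemma rsum_mono_k k k' f : (k <= k')%nat -> (forall i, 0 <= f i) -> rsum k f <= rsum k' f.
Proof. intros H Hf. induction H. lra. rewrite rsum_S. specialize (Hf m). lra. Qed.

Lemma Hn_nonneg N : 0 <= Hn N.
Proof. apply rsum_nonneg. intros; apply inv_INR_nonneg. Qed.

Lemma sig_NN N : sig N N = Hn N.
Proof.
  unfold sig, Hn. rewrite <- (rsum_rev N (fun i => / INR (S i))). apply rsum_ext. intros i Hi.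
  f_equal. f_equal. lia.
Qed.

Lemma sig_le_H N m : (m <= N)%nat -> sig N m <= Hn N.
Proof. intros H. rewrite <- sig_NN. apply rsum_mono_k; auto. intros; apply inv_INR_nonneg. Qed.

Lemma dom_Cs N m : dom (Cs N m) (sig N m).
Proof.
  unfold Cs, sig. apply (dom_fprod 0 m _ (fun i => / INR (N - i))).
  - intros; apply inv_INR_nonneg.
  - intros i Hi. simpl. eapply dom_le; [apply dom_gs| apply Rabs_pos|]. rewrite Rabs_right. lra.
    apply Rle_ge, inv_INR_nonneg.
Qed.

Lemma nn_Cs N m : nn (Cs N m).
Proof. apply nn_fprod. intros; apply nn_gs, inv_INR_nonneg. Qed.

Lemma Cs_0 N m : Cs N m O = 1.
Proof. apply coef0_fprod. intros; reflexivity. Qed.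

Lemma dom_PU m : dom (fmul (Pp (S m)) (gs (- / INR (S m)))) (Hn (S m)).
Proof.
  unfold Pp. simpl (S m - 1)%nat. rewrite Nat.sub_0_r.
  unfold Hn. rewrite rsum_S.
  apply dom_mul.
  - apply rsum_nonneg; intros; apply inv_INR_nonneg.
  - apply inv_INR_nonneg.
  - rewrite (rsum_ext m (fun i => / INR (S i)) (fun i => / INR (1 + i))) by (intros; reflexivity).
    apply (dom_fprod 1 m _ (fun i => / INR i)). intros; apply inv_INR_nonneg.
    intros i Hi. eapply dom_le; [apply dom_lin|apply Rabs_pos|]. rewrite Rabs_right. lra. apply Rle_ge, inv_INR_nonneg.
  - eapply dom_le; [apply dom_gs|apply Rabs_pos|]. rewrite Rabs_Ropp, Rabs_right. lra. apply Rle_ge, inv_INR_nonneg.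
Qed.

Lemma Hn_mono m N : (m <= N)%nat -> Hn m <= Hn N.
Proof. intros; apply rsum_mono_k; auto. intros; apply inv_INR_nonneg. Qed.

Lemma sig_nonneg N m : 0 <= sig N m.
Proof. apply rsum_nonneg; intros; apply inv_INR_nonneg. Qed.

Lemma inv_pow_nonneg j k : 0 <= / (INR j ^ k).
Proof.
  destruct (Req_dec (INR j ^ k) 0) as [E|E]. rewrite E, Rinv_0. lra.
  apply Rlt_le, Rinv_0_lt_compat. assert (0 <= INR j ^ k) by (apply pow_le, pos_INR). lra.
Qed.

Lemma term_bound N i n : (i < N)%nat ->
  Rabs (fmul (Us (S i)) (fsub (Cs N (S i)) f1) n) <=
  INR (S n) * (/ (INR (S i) ^ 2) * (sig N (S i) * Hn N ^ (n - 1))).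
Proof.
  intros Hi. set (m := S i). set (H := Hn N). set (s := sig N m).
  assert (Hs0 : 0 <= s) by apply sig_nonneg. assert (HH0 : 0 <= H) by apply Hn_nonneg.
  assert (HsH : s <= H) by (apply sig_le_H; unfold m; lia).
  assert (HmH : Hn m <= H) by (apply Hn_mono; unfold m; lia).
  assert (Hm0 : 0 <= Hn m) by apply Hn_nonneg.
  assert (E : fmul (Us m) (fsub (Cs N m) f1) =
     fmul (cst (/ (INR m ^ 2))) (fmul (fmul (Pp m) (gs (- / INR m))) (fsub (Cs N m) f1))).
  { unfold Us. fring. }
  rewrite E, coef_cst_mul, Rabs_mult.
  rewrite (Rabs_right (/ _)). 2:{ apply Rle_ge. apply inv_pow_nonneg. }
  replace (INR (S n) * (/ INR m ^ 2 * (s * H ^ (n - 1)))) with (/ INR m ^ 2 * (INR (S n) * (s * H ^ (n - 1)))) by ring.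
  apply Rmult_le_compat_l. apply inv_pow_nonneg.
  unfold fmul at 1. eapply Rle_trans; [apply rsum_abs|]. rewrite <- rsum_const.
  apply rsum_le. intros p Hp. rewrite Rabs_mult.
  assert (HV := dom_PU i p). fold m in HV.
  destruct (Nat.eq_dec p n) as [->|Hpn].
  - replace (n - n)%nat with O by lia. rewrite coef_sub, Cs_0. unfold f1, cst. 
    replace (1 - 1) with 0 by ring. rewrite Rabs_R0, Rmult_0_r. apply Rmult_le_pos; auto. apply pow_le; auto.
  - rewrite coef_sub. replace (f1 (n - p)%nat) with 0 by (unfold f1, cst; destruct (n - p)%nat eqn:Enp; [lia|reflexivity]).
    rewrite Rminus_0_r. rewrite (Rabs_right (Cs N m (n - p)%nat)) by (apply Rle_ge, nn_Cs).
    assert (HC := dom_Cs N m (n - p)%nat). rewrite Rabs_right in HC by (apply Rle_ge, nn_Cs). fold s in HC.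
    apply (Rle_trans _ (H ^ p * (s * H ^ (n - p - 1)))).
    + apply Rmult_le_compat; auto using Rabs_pos. apply nn_Cs.
      eapply Rle_trans; [apply HV|]. apply pow_incr; lra.
      assert (Es : s ^ (n - p) = s * s ^ (n - p - 1)) by (destruct (n - p)%nat eqn:E1; [lia|simpl; rewrite Nat.sub_0_r; reflexivity]). eapply Rle_trans; [apply HC|]. rewrite Es.
      apply Rmult_le_compat_l; auto. apply pow_incr; lra.
    + replace (s * H ^ (n - 1)) with (s * (H ^ p * H ^ (n - p - 1))).
      lra. rewrite <- pow_add. f_equal. f_equal. lia.
Qed.

Lemma sig_bound N m : (1 <= m <= N)%nat -> sig N m <= INR m * / INR (S N - m).
Proof.
  intros Hm. unfold sig. rewrite <- rsum_const. apply rsum_le. intros j Hj.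
  apply Rinv_le_contravar. apply lt_0_INR. lia. apply le_INR. lia.
Qed.

Lemma Err_bound N n : Rabs (Err N n) <= INR (S n) * Hn N ^ (n - 1) * (2 * Hn N / INR (S N)).
Proof.
  unfold Err. rewrite fs_coef. eapply Rle_trans; [apply rsum_abs|].
  eapply Rle_trans; [apply rsum_le; intros i Hi; apply term_bound; auto|].
  rewrite (rsum_ext N _ (fun i => (INR (S n) * Hn N ^ (n - 1)) * (/ INR (S i) ^ 2 * sig N (S i)))) by (intros; ring).
  rewrite rsum_scal. apply Rmult_le_compat_l.
  { apply Rmult_le_pos. apply pos_INR. apply pow_le, Hn_nonneg. }
  apply (Rle_trans _ (rsum N (fun i => / INR (S N) * (/ INR (S i) + / INR (N - i))))).
  - apply rsum_le. intros i Hi.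
    assert (Hsb := sig_bound N (S i)). 
    replace (S N - S i)%nat with (N - i)%nat in Hsb by lia.
    assert (HNi : 0 < INR (N - i)) by (apply lt_0_INR; lia).
    assert (Hi0 : 0 < INR (S i)) by (apply lt_0_INR; lia).
    assert (HN0 : 0 < INR (S N)) by (apply lt_0_INR; lia).
    apply (Rle_trans _ (/ INR (S i) ^ 2 * (INR (S i) * / INR (N - i)))).
    + apply Rmult_le_compat_l. apply inv_pow_nonneg. apply Hsb. lia.
    + right. replace (INR (S N)) with (INR (S i) + INR (N - i)) by (rewrite <- plus_INR; f_equal; lia).
      field. lra.
  - rewrite rsum_scal, rsum_plus. fold (Hn N). change (rsum N (fun i => / INR (N - i))) with (sig N N).
    rewrite sig_NN. right. unfold Rdiv. ring.
Qed.

Lemma exp_pow x k : exp x ^ k = exp (INR k * x).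
Proof. induction k. simpl. rewrite Rmult_0_l, exp_0. reflexivity.
  rewrite S_INR. simpl pow. rewrite IHk. rewrite <- exp_plus. f_equal. ring. Qed.

Lemma pow_exp_bound x j : 0 <= x -> (1 <= j)%nat -> x ^ j <= INR j ^ j * exp x.
Proof.
  intros Hx Hj. assert (Hj0 : 0 < INR j) by (apply lt_0_INR; lia).
  replace (x ^ j) with (INR j ^ j * (x / INR j) ^ j).
  2:{ rewrite <- Rpow_mult_distr. f_equal. field. lra. }
  apply Rmult_le_compat_l. apply pow_le; lra.
  replace (exp x) with (exp (x / INR j) ^ j). 2:{ rewrite exp_pow. f_equal. field. lra. }
  apply pow_incr. split. apply Rmult_le_pos; [lra|apply Rlt_le, Rinv_0_lt_compat; lra].
  pose proof (exp_ineq1_le (x / INR j)). assert (0 <= x / INR j) by (apply Rmult_le_pos; [lra|apply Rlt_le, Rinv_0_lt_compat; lra]). lra.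
Qed.

Lemma Hn_S N : Hn (S N) = Hn N + / INR (S N).
Proof. reflexivity. Qed.

Lemma expH_upper N : (1 <= N)%nat -> exp (Hn N) <= exp 1 * INR N.
Proof.
  intros HN. induction HN.
  - unfold Hn. simpl. rewrite Rplus_0_l, Rinv_1, Rmult_1_r. lra.
  - rewrite Hn_S, exp_plus.
    assert (Hm : 0 < INR m) by (apply lt_0_INR; lia).
    assert (Hm1 : 0 < INR (S m)) by (apply lt_0_INR; lia).
    assert (E : exp (/ INR (S m)) <= INR (S m) / INR m).
    { pose proof (exp_ineq1_le (- / INR (S m))) as E1.
      assert (E2 : exp (- / INR (S m)) * exp (/ INR (S m)) = 1) by (rewrite <- exp_plus; replace (- / INR (S m) + / INR (S m)) with 0 by ring; apply exp_0).
      assert (E3 : 1 + - / INR (S m) = INR m / INR (S m)) by (rewrite S_INR; field; rewrite S_INR in Hm1; lra).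
      rewrite E3 in E1. pose proof (exp_pos (/ INR (S m))).
      apply (Rmult_le_reg_l (INR m / INR (S m))). apply Rdiv_lt_0_compat; lra.
      replace (INR m / INR (S m) * (INR (S m) / INR m)) with 1 by (field; lra).
      rewrite <- E2. apply Rmult_le_compat_r; lra. }
    apply (Rle_trans _ (exp 1 * INR m * (INR (S m) / INR m))).
    apply Rmult_le_compat; auto; left; apply exp_pos.
    right. field. lra.
Qed.

Lemma expH_lower N : INR (S N) <= exp (Hn N).
Proof.
  induction N.
  - unfold Hn. simpl. rewrite exp_0. lra.
  - rewrite Hn_S, exp_plus.
    assert (Hm1 : 0 < INR (S N)) by (apply lt_0_INR; lia).
    pose proof (exp_ineq1_le (/ INR (S N))).
    apply (Rle_trans _ (INR (S N) * (1 + / INR (S N)))).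
    + right. rewrite (S_INR (S N)). field. lra.
    + assert (0 < / INR (S N)) by (apply Rinv_0_lt_compat; lra). apply Rmult_le_compat; lra.
Qed.

Lemma Hn_inf : is_lim_seq Hn p_infty.
Proof.
  apply is_lim_seq_spec. intros M.
  assert (H := is_lim_seq_INR). apply is_lim_seq_spec in H. destruct (H (exp M)) as [N0 HN0].
  exists N0. intros n Hn0. apply exp_lt_inv. specialize (HN0 n Hn0). pose proof (expH_lower n).
  rewrite S_INR in H0. lra.
Qed.

Lemma Hn_pos N : (1 <= N)%nat -> 0 < Hn N.
Proof. intros HN. induction HN. unfold Hn; simpl; lra. rewrite Hn_S.
  assert (0 < / INR (S m)) by (apply Rinv_0_lt_compat, lt_0_INR; lia). lra. Qed.

Lemma Hpow_lim k : is_lim_seq (fun N => Hn N ^ (S k) / INR (S N)) 0.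
Proof.
  set (C := INR (S (S k)) ^ (S (S k)) * exp 1).
  assert (HC : is_lim_seq (fun N => C * / Hn N) 0).
  { replace (Finite 0) with (Rbar_mult C (Rbar_inv p_infty)) by (simpl; f_equal; ring).
    apply is_lim_seq_scal_l. apply is_lim_seq_inv. apply Hn_inf. discriminate. }
  apply (is_lim_seq_le_le_loc (fun _ => 0) _ (fun N => C * / Hn N)); auto using is_lim_seq_const.
  exists 1%nat. intros N HN. assert (HH := Hn_pos N HN).
  assert (HN0 : 0 < INR (S N)) by (apply lt_0_INR; lia).
  split.
  - apply Rmult_le_pos. apply pow_le; lra. apply Rlt_le, Rinv_0_lt_compat; lra.
  - assert (B1 := pow_exp_bound (Hn N) (S (S k)) (Rlt_le _ _ HH) ltac:(lia)).
    assert (B2 := expH_upper N HN).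
    assert (B3 : Hn N ^ S (S k) <= C * INR (S N)).
    { eapply Rle_trans; [apply B1|]. unfold C. rewrite Rmult_assoc. apply Rmult_le_compat_l.
      apply pow_le, pos_INR. eapply Rle_trans; [apply B2|]. apply Rmult_le_compat_l. left; apply exp_pos.
      rewrite S_INR; lra. }
    change (Hn N ^ S (S k)) with (Hn N * Hn N ^ S k) in B3.
    apply (Rmult_le_reg_l (Hn N * INR (S N))). nra.
    replace (Hn N * INR (S N) * (Hn N ^ S k / INR (S N))) with (Hn N * Hn N ^ S k) by (field; lra).
    replace (Hn N * INR (S N) * (C * / Hn N)) with (C * INR (S N)) by (field; lra). auto.
Qed.

Lemma Err_lim n : is_lim_seq (fun N => Err N n) 0.
Proof.
  apply is_lim_seq_abs_0.
  apply (is_lim_seq_le_le (fun _ => 0) _ (fun N => 2 * INR (S n) * (Hn N ^ S (n - 1) / INR (S N)))).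
  - intros N. split. apply Rabs_pos. eapply Rle_trans; [apply Err_bound|]. right. simpl pow. unfold Rdiv. ring.
  - apply is_lim_seq_const.
  - replace (Finite 0) with (Rbar_mult (2 * INR (S n)) 0) by (simpl; f_equal; ring).
    apply is_lim_seq_scal_l. apply Hpow_lim.
Qed.

Lemma sr_nonneg a b f : (forall j, 0 <= f j) -> 0 <= sum_range a b f.
Proof. intros H. rewrite sr_rsum. apply rsum_nonneg. auto. Qed.

Lemma mzv_nonneg s lo N : 0 <= mzv_part s lo N.
Proof.
  revert lo; induction s as [|a s IH]; intros lo; simpl. lra.
  apply sr_nonneg. intros j. apply Rmult_le_pos; auto. apply inv_pow_nonneg.
Qed.

Lemma mzv_mono s lo N : mzv_part s lo N <= mzv_part s lo (S N).
Proof.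
  revert lo; induction s as [|a s IH]; intros lo; simpl. lra.
  rewrite !sr_rsum. eapply Rle_trans.
  - apply rsum_le. intros i Hi. apply Rmult_le_compat_l. apply inv_pow_nonneg. apply IH.
  - apply rsum_mono_k. lia. intros j. apply Rmult_le_pos. apply inv_pow_nonneg. apply mzv_nonneg.
Qed.

Lemma tele_sum a d : 0 < a -> rsum d (fun i => 2 / ((a + INR i) * (a + INR i + 1))) = 2 / a - 2 / (a + INR d).
Proof.
  intros Ha. induction d.
  - simpl. field. lra.
  - rewrite rsum_S, IHd, S_INR. pose proof (pos_INR d). field. repeat split; lra.
Qed.

Lemma sr_tele_bound lo N f : (forall j, (1 <= j)%nat -> f j <= 2 / (INR j * INR (S j))) ->
  sum_range (S lo) N f <= 2 / INR (S lo).
Proof.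
  intros Hf. rewrite sr_rsum.
  assert (Ha : 0 < INR (S lo)) by (apply lt_0_INR; lia).
  eapply Rle_trans.
  - apply (rsum_le _ _ (fun i => 2 / ((INR (S lo) + INR i) * (INR (S lo) + INR i + 1)))).
    intros i Hi. eapply Rle_trans; [apply Hf; lia|]. right. rewrite S_INR, plus_INR. reflexivity.
  - rewrite tele_sum by auto. pose proof (pos_INR (S N - S lo)).
    assert (0 <= 2 / (INR (S lo) + INR (S N - S lo))) by (apply Rmult_le_pos; [lra|apply Rlt_le, Rinv_0_lt_compat; lra]). lra.
Qed.

Lemma mzv_bound r k lo N : (2 <= k)%nat -> mzv_part (repeat 1%nat r ++ k :: nil) lo N <= 2 / INR (S lo).
Proof.
  intros Hk. revert lo; induction r; intros lo.
  - simpl (repeat 1%nat 0 ++ k :: nil). cbn [mzv_part]. apply sr_tele_bound. intros j Hj.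
    rewrite Rmult_1_r. assert (Hj0 : 1 <= INR j) by (apply (le_INR 1); auto).
    assert (1 <= INR j ^ k).
    { apply pow_R1_Rle. lra. }
    assert (INR j ^ 2 <= INR j ^ k) by (apply Rle_pow; auto).
    apply (Rle_trans _ (/ (INR j ^ 2))). apply Rinv_le_contravar. apply pow_lt; lra. auto.
    rewrite S_INR. replace (2 / (INR j * (INR j + 1))) with (/ ((INR j * (INR j + 1)) / 2)) by (field; lra). replace (INR j ^ 2) with (INR j * INR j) by ring. apply Rinv_le_contravar; nra.
  - change (repeat 1%nat (S r) ++ k :: nil) with (1%nat :: (repeat 1%nat r ++ k :: nil)).
    cbn [mzv_part]. apply sr_tele_bound. intros j Hj. assert (Hj0 : 1 <= INR j) by (apply (le_INR 1); auto).
    apply (Rle_trans _ (/ INR j ^ 1 * (2 / INR (S j)))).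
    + apply Rmult_le_compat_l. apply inv_pow_nonneg. apply IHr.
    + right. rewrite pow_1. field. rewrite S_INR. lra.
Qed.

Lemma mzv_lim r k : (2 <= k)%nat ->
  is_lim_seq (fun N => mzv_part (repeat 1%nat r ++ k :: nil) 0 N) (mzv (repeat 1%nat r ++ k :: nil)).
Proof.
  intros Hk. unfold mzv. apply Lim_seq_correct'. apply (ex_finite_lim_seq_incr _ 2).
  - intros; apply mzv_mono.
  - intros N. eapply Rle_trans; [apply mzv_bound; auto|]. simpl. lra.
Qed.

Lemma lim_rsum k (u : nat -> nat -> R) (c l : nat -> R) :
  (forall r, (r < k)%nat -> is_lim_seq (u r) (l r)) ->
  is_lim_seq (fun N => rsum k (fun r => c r * u r N)) (rsum k (fun r => c r * l r)).
Proof.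
  induction k; intros H.
  - simpl. apply is_lim_seq_const.
  - simpl rsum. apply is_lim_seq_plus'. apply IHk. intros; apply H; lia.
    apply (is_lim_seq_ext (fun N => c k * u k N)). intros; reflexivity.
    replace (Finite (c k * l k)) with (Rbar_mult (c k) (l k)) by reflexivity.
    apply is_lim_seq_scal_l. apply H. lia.
Qed.

Theorem proposition4p2 (n : nat) :
  let S := sum_range 0 n
             (fun r => (-1) ^ (r + n) * mzv (repeat 1%nat r ++ (n + 2 - r)%nat :: nil)) in
  (forall m : nat, n = (2 * m)%nat -> S = mzsv (repeat 2%nat (m + 1))) /\
  (forall m : nat, n = (2 * m + 1)%nat -> S = 0).
Proof.
  intros T.
  assert (Hlim : is_lim_seq (fun N => SV N 1 (n + 2)%nat) T).
  { apply (is_lim_seq_ext (fun N => yv N 0 n + Err N n)). intros N; symmetry; apply coef_main.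
    replace T with (T + 0) by ring. apply is_lim_seq_plus'; [|apply Err_lim].
    unfold yv, T. rewrite sr0. apply (is_lim_seq_ext (fun N => rsum (S n) (fun r => (-1) ^ (r + n) *
         mzv_part (repeat 1%nat r ++ (n + 2 - r)%nat :: nil) 0 N))).
    intros N. rewrite sr0. reflexivity.
    apply (lim_rsum (S n) (fun r N => mzv_part (repeat 1%nat r ++ (n + 2 - r)%nat :: nil) 0 N)
      (fun r => (-1) ^ (r + n)) (fun r => mzv (repeat 1%nat r ++ (n + 2 - r)%nat :: nil))).
    intros r Hr. apply mzv_lim. lia. }
  split.
  - intros m Hm. unfold mzsv.
    replace (n + 2)%nat with (2 * (m + 1))%nat in Hlim by lia.
    assert (E : forall N, SV N 1 (2 * (m + 1))%nat = mzsv_part (repeat 2%nat (m + 1)) 1 N).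
    { intros N. unfold SV. rewrite Nat.even_mul. simpl Nat.even. simpl orb. rewrite Nat.div2_double. reflexivity. }
    apply (is_lim_seq_ext _ _ _ E) in Hlim. assert (L := is_lim_seq_unique _ _ Hlim).
    change (Lim_seq (fun N => mzsv_part (repeat 2%nat (m + 1)) 1 N)) with (Lim_seq (mzsv_part (repeat 2%nat (m + 1)) 1)).
    rewrite L. reflexivity.
  - intros m Hm.
    assert (E : forall N, SV N 1 (n + 2)%nat = 0).
    { intros N. unfold SV. replace (n + 2)%nat with (S (2 * (m + 1)))%nat by lia.
      rewrite Nat.even_succ, Nat.odd_mul. reflexivity. }
    apply (is_lim_seq_ext _ _ _ E) in Hlim. apply is_lim_seq_unique in Hlim.
    rewrite Lim_seq_const in Hlim. injection Hlim. auto.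
Qed.
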